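(* Let $M\ge 2$ and let $L^{(1)},\dots,L^{(M)}$ and $L=\sum_{l=1}^{M}L^{(l)}$ be the $N^{(1)}\times N^{(1)}$ matrices of a hierarchical system as described in the context. Then \[ \lambda(L)=\{0\}\cup\big(\lambda(L^{(1)})\setminus\{0\}\big)\cup\cdots\cup\big(\lambda(L^{(M)})\setminus\{0\}\big), \] and among all the eigenvalues of $L$ (the $N^{(1)}$ eigenvalues counted with algebraic multiplicity) exactly one equals $0$.
   Context: Hierarchical structure. Fix an integer $M\ge 2$ (number of layers) and positive integers $N^{(1)},\dots,N^{(M)}$; set $N^{(M+1)}:=1$. For each $l\in\{1,\dots,M\}$ the $N^{(l)}$ nodes of layer $l$ are partitioned into $N^{(l+1)}$ groups $G^{(l)}_1,\dots,G^{(l)}_{N^{(l+1)}}$ of sizes $k^{(l)}_p\ge 1$ (so $\sum_p k^{(l)}_p=N^{(l)}$), numbered consecutively: group $G^{(l)}_p$ consists of the nodes $\sum_{m<p}k^{(l)}_m+1,\dots,\sum_{m\le p}k^{(l)}_m$ of layer $l$. For $l\le M-1$, group $G^{(l)}_p$ is the subordinate group of node $p$ of layer $l+1$. Each group $G^{(l)}_p$ carries a connected undirected graph with binary (0/1) adjacency matrix; $L^{(l)}_p\in\mathbb{R}^{k^{(l)}_p\times k^{(l)}_p}$ is its Laplacian (diagonal degree matrix minus adjacency matrix), and $L^{(l)}_D=\mathrm{diag}(L^{(l)}_1,\dots,L^{(l)}_{N^{(l+1)}})\in\mathbb{R}^{N^{(l)}\times N^{(l)}}$ (block diagonal). Weights: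 fix positive constants $a_1,\dots,a_{N^{(1)}}$; set $a^{(1)}_i=a_i$ and recursively $a^{(l+1)}_p=\sum_{i\in G^{(l)}_p}a^{(l)}_i$. Let $K^{(l)}=\mathrm{diag}(a^{(l)}_1,\dots,a^{(l)}_{N^{(l)}})^{-1}$. For $l=1,\dots,M-1$: $B^{(l)}=\mathrm{diag}(\mathbf{1}_{k^{(l)}_1},\dots,\mathbf{1}_{k^{(l)}_{N^{(l+1)}}})\in\mathbb{R}^{N^{(l)}\times N^{(l+1)}}$ (block diagonal, $\mathbf{1}_k$ the all-ones column vector of length $k$), and $C^{(l)}=\mathrm{diag}(C^{(l)}_1,\dots,C^{(l)}_{N^{(l+1)}})\in\mathbb{R}^{N^{(l+1)}\times N^{(l)}}$ (block diagonal), where each $C^{(l)}_p\in\mathbb{R}^{1\times k^{(l)}_p}$ is a row vector with nonnegative entries summing to $1$. Define $L^{(1)}=K^{(1)}L^{(1)}_D$ and, for $l=2,\dots,M$, $L^{(l)}=B^{(1)}B^{(2)}\cdots B^{(l-1)}\,K^{(l)}L^{(l)}_D\,C^{(l-1)}\cdots C^{(2)}C^{(1)}$; all are $N^{(1)}\times N^{(1)}$. $\lambda(A)$ denotes the set of eigenvalues of a square matrix $A$. *)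

(* Defs.v *)
From HB Require Import structures.
From mathcomp Require Import all_boot all_order all_algebra.
From mathcomp Require Import complex.
Set Implicit Arguments. Unset Strict Implicit. Unset Printing Implicit Defensive.
Import Order.TTheory GRing.Theory Num.Theory.
Local Open Scope ring_scope.

(* Layers are indexed 1..M as in the paper; N l is the number of nodes of
   layer l (the value N 0 is irrelevant).  @g l i is the group (= node of
   layer l+1) containing node i of layer l. *)

Section Hier.
Variable R : rcfType.
Variable N : nat -> nat.
Variable g : forall l : nat, 'I_(N l) -> 'I_(N l.+1).

Definition consecutive_groups (l : nat) : Prop :=
  (forall i j : 'I_(N l), (i <= j)%N -> (@g l i <= @g l j)%N) /\
  (forall p : 'I_(N l.+1), exists i, @g l i = p).

Definition group_graphs_ok (l : nat) (adj : rel 'I_(N l)) : Prop :=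
  (forall i j, adj i j = adj j i) /\
  (forall i j, adj i j -> @g l i = @g l j) /\
  (forall i j, @g l i = @g l j -> connect adj i j).

Definition lapD (l : nat) (adj : rel 'I_(N l)) : 'M[R]_(N l) :=
  \matrix_(i, j) ((i == j)%:R * (#|[pred k | adj i k]|)%:R - (adj i j)%:R).

Definition Bmat (l : nat) : 'M[R]_(N l, N l.+1) :=
  \matrix_(i, p) (@g l i == p)%:R.

Definition C_ok (l : nat) (C : 'M[R]_(N l.+1, N l)) : Prop :=
  (forall p i, @g l i != p -> C p i = 0) /\
  (forall p i, 0 <= C p i) /\
  (forall p, \sum_i C p i = 1).

Variable a : 'I_(N 1%N) -> R.

Fixpoint weight (l : nat) : 'I_(N l.+1) -> R :=
  match l as l0 return 'I_(N l0.+1) -> R with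
  | 0 => a
  | l'.+1 => fun p => \sum_(i | @g l'.+1 i == p) @weight l' i
  end.

Definition Kmat (l : nat) : 'M[R]_(N l.+1) :=
  diag_mx (\row_i (@weight l i)^-1).

Fixpoint Bprod (l : nat) : 'M[R]_(N 1%N, N l.+1) :=
  match l as l0 return 'M[R]_(N 1%N, N l0.+1) with
  | 0 => 1%:M
  | l'.+1 => Bprod l' *m Bmat l'.+1
  end.

Variable C : forall l : nat, 'M[R]_(N l.+1, N l).

Fixpoint Cprod (l : nat) : 'M[R]_(N l.+1, N 1%N) :=
  match l as l0 return 'M[R]_(N l0.+1, N 1%N) with
  | 0 => 1%:M
  | l'.+1 => C l'.+1 *m Cprod l'
  end.

Variable adj : forall l : nat, rel 'I_(N l).

(* Llayer l = L^(l+1) of the paper *)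
Definition Llayer (l : nat) : 'M[R]_(N 1%N) :=
  Bprod l *m Kmat l *m lapD (@adj l.+1) *m Cprod l.

End Hier.

Definition spec (R : rcfType) (n : nat) (A : 'M[R]_n) : pred R[i] :=
  fun z => eigenvalue (map_mx (real_complex R) A) z.

(* Main.v *)
Require Import Defs.
From HB Require Import structures.
From mathcomp Require Import all_boot all_order all_algebra.
From mathcomp Require Import complex.
From mathcomp Require Import ring lra.
Import Order.TTheory GRing.Theory Num.Theory.
Local Open Scope ring_scope.

Module Helpers.
Set Implicit Arguments. Unset Strict Implicit. Unset Printing Implicit Defensive.
Lemma sylv_det (S : comNzRingType) n m (A : 'M[S]_(n, m)) (B : 'M[S]_(m, n)) :
  \det (1%:M + A *m B) = \det (1%:M + B *m A).
Proof.
have e1 : block_mx 1%:M A (- B) 1%:M =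
   block_mx (1%:M + A *m B) A 0 1%:M *m block_mx 1%:M 0 (- B) 1%:M.
  rewrite mulmx_block ?mulmx1 ?mul1mx ?mulmx0 ?mul0mx ?addr0 ?add0r.
  by rewrite mulmxN addrK.
have e2 : block_mx 1%:M A (- B) 1%:M =
   block_mx 1%:M 0 (- B) 1%:M *m block_mx 1%:M A 0 (1%:M + B *m A).
  rewrite mulmx_block ?mulmx1 ?mul1mx ?mulmx0 ?mul0mx ?addr0 ?add0r.
  by rewrite mulNmx addrCA addNr addr0.
have := congr1 determinant e1; rewrite e2 !det_mulmx !det_ublock !det_lblock !det1.
by rewrite !mulr1 !mul1r => ->.
Qed.

Lemma key (S : comNzRingType) n m (Y : 'M[S]_n) (B : 'M[S]_(n, m)) (C : 'M[S]_(m, n))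
  (E T : 'M[S]_m) :
  C *m B = 1%:M -> Y *m B = B *m E ->
  \det (Y - B *m T *m C) * \det E = \det (E - T) * \det Y.
Proof.
move=> CB YB.
pose F (D : 'M[S]_m) := Y *m (1%:M - B *m C) + B *m D *m C.
have FD : forall D, \det (F D) = \det (F 1%:M) * \det D.
  move=> D.
  have F1B : F 1%:M *m B = B.
    rewrite /F mulmx1 mulmxDl -!mulmxA CB mulmx1 mulmxBl mul1mx -mulmxA CB mulmx1.
    by rewrite subrr mulmx0 add0r.
  have -> : F D = F 1%:M *m (1%:M + B *m ((D - 1%:M) *m C)).
    rewrite mulmxDr mulmx1 mulmxA F1B.
    rewrite /F mulmxBl mulmxBr mulmx1 !mulmxA mulmxBr mul1mx !mulmxA mulmx1.
    by rewrite -[RHS]addrA [B *m C + _]addrC subrK.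
  by rewrite det_mulmx sylv_det -mulmxA CB mulmx1 addrC subrK.
have eY : Y = F E by rewrite /F mulmxBr mulmx1 mulmxA YB subrK.
have eU : Y - B *m T *m C = F (E - T).
  by rewrite /F mulmxBr mulmx1 mulmxA YB mulmxBr mulmxBl addrA subrK.
have eY' : \det Y = \det (F 1%:M) * \det E by rewrite {1}eY FD.
by rewrite eU FD eY' mulrCA mulrA.
Qed.

Lemma charkey (S : comNzRingType) n m (X : 'M[S]_n) (B : 'M[S]_(n, m)) (C : 'M[S]_(m, n))
  (T : 'M[S]_m) :
  C *m B = 1%:M -> X *m B = 0 ->
  char_poly (X + B *m T *m C) * 'X^m = char_poly T * char_poly X.
Proof.
move=> CB XB.
have e : char_poly_mx (X + B *m T *m C) =
   char_poly_mx X - map_mx polyC B *m map_mx polyC T *m map_mx polyC C.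
  by rewrite /char_poly_mx map_mxD !map_mxM opprD addrA.
rewrite /char_poly e -(@det_scalar _ m 'X).
apply: key.
  by rewrite -map_mxM CB map_scalar_mx.
rewrite /char_poly_mx mulmxBl -map_mxM XB map_mx0 subr0.
by rewrite mul_scalar_mx mul_mx_scalar.
Qed.

Lemma char_poly0 (S : comNzRingType) n : char_poly (0 : 'M[S]_n) = 'X^n.
Proof. by rewrite /char_poly /char_poly_mx map_mx0 subr0 det_scalar. Qed.

Lemma Bprod_shift (R : rcfType) (N : nat -> nat) (g : forall l, 'I_(N l) -> 'I_(N l.+1)) l :
  Bprod R g l.+1 = Bmat R g 1 *m Bprod R (N := fun k => N k.+1) (fun k => g k.+1) l.
Proof.
elim: l => [|l IH]; first by rewrite /= mul1mx mulmx1.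
rewrite -[Bprod R g l.+2]/(Bprod R g l.+1 *m Bmat R g l.+2) IH -mulmxA.
by [].
Qed.

Lemma Cprod_shift (R : rcfType) (N : nat -> nat) (C : forall l, 'M[R]_(N l.+1, N l)) l :
  Cprod C l.+1 = Cprod (N := fun k => N k.+1) (fun k => C k.+1) l *m C 1%N.
Proof.
elim: l => [|l IH]; first by rewrite /= mul1mx mulmx1.
by rewrite -[Cprod C l.+2]/(C l.+2 *m Cprod C l.+1) IH mulmxA.
Qed.

Lemma core (R : rcfType) M : forall (N : nat -> nat) (g : forall l, 'I_(N l) -> 'I_(N l.+1))
  (C : forall l, 'M[R]_(N l.+1, N l)) (X : forall l, 'M[R]_(N l.+1)),
  (0 < M)%N ->
  (forall l, (l.+1 < M)%N -> C l.+1 *m Bmat R g l.+1 = 1%:M /\ X l *m Bmat R g l.+1 = 0) ->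
  char_poly (\sum_(l < M) Bprod R g l *m X l *m Cprod C l) * \prod_(l < M.-1) 'X^(N l.+2)
   = \prod_(l < M) char_poly (X l).
Proof.
elim: M => [//|[|M] IH] N g C X _ H.
  by rewrite !big_ord1 big_ord0 mulr1 /= mul1mx mulmx1.
rewrite [\sum_(l < M.+2) _]big_ord_recl /= mul1mx mulmx1.
have -> : \sum_(i < M.+1) Bprod R g i.+1 *m X i.+1 *m Cprod C i.+1 =
  Bmat R g 1 *m (\sum_(i < M.+1) Bprod R (N := fun k => N k.+1) (fun k => g k.+1) i
      *m X i.+1 *m Cprod (N := fun k => N k.+1) (fun k => C k.+1) i) *m C 1%N.
  rewrite mulmx_sumr mulmx_suml; apply: eq_bigr => i _.
  by rewrite Bprod_shift Cprod_shift !mulmxA.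
have [H1 H2] := H 0%N isT.
have ck := @charkey _ _ _ (X 0%N) (Bmat R g 1) (C 1%N) (\sum_(i < M.+1) Bprod R (N := fun k => N k.+1) (fun k => g k.+1) i
      *m X i.+1 *m Cprod (N := fun k => N k.+1) (fun k => C k.+1) i) H1 H2.
have IH' := IH (fun k => N k.+1) (fun k => g k.+1) (fun k => C k.+1) (fun k => X k.+1) isT
  (fun l hl => H l.+1 hl).
rewrite [\prod_(i < M.+2) _]big_ord_recl [\prod_(i < M.+1) 'X^(_)]big_ord_recl /=.
rewrite mulrA ck -IH' /=.
by rewrite mulrCA mulrA.
Qed.

Definition LDm (R : rcfType) n (adj : rel 'I_n) : 'M[R]_n :=
  \matrix_(i, j) ((i == j)%:R * (#|[pred k | adj i k]|)%:R - (adj i j)%:R).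
Definition Bm (R : rcfType) n p (g : 'I_n -> 'I_p) : 'M[R]_(n, p) :=
  \matrix_(i, q) (g i == q)%:R.

Lemma deg_sum (R : rcfType) n (adj : rel 'I_n) i :
  (#|[pred k | adj i k]|)%:R = \sum_j (adj i j)%:R :> R.
Proof.
rewrite -sum1_card natr_sum big_mkcond /=; apply: eq_bigr => j _.
by rewrite inE; case: (adj i j).
Qed.

Lemma LD_B (R : rcfType) n p (g : 'I_n -> 'I_p) (adj : rel 'I_n) :
  (forall i j, adj i j -> g i = g j) ->
  LDm R adj *m Bm R g = 0.
Proof.
move=> ing; apply/matrixP => i q; rewrite !mxE.
under eq_bigr do rewrite !mxE mulrBl.
rewrite sumrB (bigD1 i) //= eqxx mul1r big1 ?addr0; last first.
  by move=> j /negbTE; rewrite eq_sym => ->; rewrite !mul0r.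
rewrite deg_sum mulr_suml; apply/eqP; rewrite subr_eq0; apply/eqP; apply: eq_bigr => j _.
by case e: (adj i j); rewrite ?mul0r // (ing _ _ e).
Qed.

Lemma LD_ker (R : rcfType) n (adj : rel 'I_n) :
  (forall i j, adj i j = adj j i) -> forall u : 'rV[R]_n,
  u *m LDm R adj = 0 -> forall i j, adj i j -> u 0 i = u 0 j.
Proof.
move=> sym u hu.
have F : forall i, \sum_j (adj i j)%:R * (u 0 i - u 0 j) = 0.
  move=> i; transitivity ((u *m LDm R adj) 0 i); last by rewrite hu mxE.
  rewrite mxE; under eq_bigr do rewrite mulrBr.
  under [in RHS]eq_bigr do rewrite mxE mulrBr.
  rewrite !sumrB; congr (_ - _); last by apply: eq_bigr => j _; rewrite sym mulrC.
  rewrite [RHS](bigD1 i) //= eqxx mul1r [X in _ + X]big1 ?addr0; last first.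
    by move=> j /negbTE hj; rewrite hj mul0r mulr0.
  by rewrite deg_sum mulr_sumr; apply: eq_bigr => j _; rewrite mulrC.
have S0 : \sum_i \sum_j (adj i j)%:R * (u 0 i - u 0 j) ^+ 2 = 0.
  have e : forall i j, (adj i j)%:R * (u 0 i - u 0 j) ^+ 2 =
     (adj i j)%:R * (u 0 i - u 0 j) * u 0 i - (adj i j)%:R * (u 0 i - u 0 j) * u 0 j.
    by move=> i j; ring.
  under eq_bigr do under eq_bigr do rewrite e.
  under eq_bigr do rewrite sumrB -mulr_suml F mul0r sub0r.
  rewrite sumrN exchange_big /=.
  under eq_bigr do rewrite -mulr_suml.
  rewrite big1 ?oppr0 // => j _.
  have -> : \sum_i (adj i j)%:R * (u 0 i - u 0 j) = - \sum_i (adj j i)%:R * (u 0 j - u 0 i).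
    by rewrite -sumrN; apply: eq_bigr => i _; rewrite sym; ring.
  by rewrite F oppr0 mul0r.
move=> i j aij.
have ge : forall i j, 0 <= (adj i j)%:R * (u 0 i - u 0 j) ^+ 2 :> R.
  by move=> i' j'; rewrite mulr_ge0 ?ler0n ?sqr_ge0.
have hi : \sum_j (adj i j)%:R * (u 0 i - u 0 j) ^+ 2 = 0.
  apply: (psumr_eq0P (P := predT) _ S0) => // k _.
  by apply: sumr_ge0 => l _; apply: ge.
have hij : (adj i j)%:R * (u 0 i - u 0 j) ^+ 2 = 0.
  by apply: (psumr_eq0P (P := predT) _ hi) => // k _.
move: hij; rewrite aij mul1r => /eqP; rewrite sqrf_eq0 subr_eq0 => /eqP //.
Qed.

Lemma LD_ker_grp (R : rcfType) n p (g : 'I_n -> 'I_p) (adj : rel 'I_n) :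
  (forall i j, adj i j = adj j i) ->
  (forall i j, g i = g j -> connect adj i j) -> forall u : 'rV[R]_n,
  u *m LDm R adj = 0 -> forall i j, g i = g j -> u 0 i = u 0 j.
Proof.
move=> sym conn u hu i j gij.
have cl : closed adj [pred k | u 0 k == u 0 i].
  move=> x y axy; rewrite !inE (LD_ker sym hu axy) //.
have := closed_connect cl (conn _ _ gij); rewrite !inE eqxx => /esym/eqP.
by move=> ->.
Qed.

Lemma nonsing (R : rcfType) n p (g : 'I_n -> 'I_p) (adj : rel 'I_n) (w : 'I_n -> R)
  (C0 : 'M[R]_(p, n)) :
  (forall i j, adj i j = adj j i) ->
  (forall i j, adj i j -> g i = g j) ->
  (forall i j, g i = g j -> connect adj i j) ->
  (forall i, 0 < w i) ->
  C0 *m Bm R g = 1%:M ->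
  \det (diag_mx (\row_i (w i)^-1) *m LDm R adj - Bm R g *m C0) != 0.
Proof.
move=> sym ing conn wpos CB.
apply/det0P => -[v vn0 hv].
have e1 : v *m diag_mx (\row_i (w i)^-1) *m LDm R adj = v *m Bm R g *m C0.
  by apply/eqP; rewrite -subr_eq0 -!mulmxA -mulmxBr hv.
have vB : v *m Bm R g = 0.
  move: (congr1 (mulmx^~ (Bm R g)) e1) => /=.
  by rewrite -!mulmxA LD_B // mulmx0 CB mulmx1 mulmx0 => ->.
have hu : (v *m diag_mx (\row_i (w i)^-1)) *m LDm R adj = 0.
  by rewrite e1 vB mul0mx.
have uc := LD_ker_grp sym conn hu.
move/eqP: vn0; apply; apply/rowP => i; rewrite mxE.
have ui : forall j, v 0 j = (v *m diag_mx (\row_i (w i)^-1)) 0 j * w j.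
  move=> j; rewrite mul_mx_diag !mxE -mulrA mulVf ?mulr1 //.
  by apply: lt0r_neq0.
have := congr1 (fun A : 'rV[R]_p => A 0 (g i)) vB; rewrite !mxE.
under eq_bigr do rewrite mxE ui.
have e2 : forall j, (v *m diag_mx (\row_i (w i)^-1)) 0 j * w j * (g j == g i)%:R
   = (v *m diag_mx (\row_i (w i)^-1)) 0 i * (w j * (g j == g i)%:R).
  move=> j; case: eqP => [gj|]; last by rewrite !mulr0.
  by rewrite (uc j i gj) mulrA.
under eq_bigr do rewrite e2.
rewrite -mulr_sumr => /eqP; rewrite mulf_eq0 => /orP[/eqP u0|].
  by rewrite ui u0 mul0r.
rewrite (bigD1 i) //= eqxx mulr1.
have : 0 <= \sum_(j | j != i) w j * (g j == g i)%:R.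
  by apply: sumr_ge0 => j _; rewrite mulr_ge0 ?ler0n // ltW // wpos.
have := wpos i.
move=> h1 h2 /eqP h3; exfalso; move: h1 h2 h3; clear; lra.
Qed.

Lemma card_sum (R : rcfType) (T : finType) (P : pred T) :
  (#|[pred k | P k]|)%:R = \sum_j (P j)%:R :> R.
Proof.
rewrite -sum1_card natr_sum big_mkcond /=; apply: eq_bigr => j _.
by rewrite inE; case: (P j).
Qed.

Lemma char_scalar (S : comNzRingType) n (c : S) :
  char_poly (c%:M : 'M[S]_n) = ('X - c%:P) ^+ n.
Proof.
rewrite /char_poly /char_poly_mx map_scalar_mx -det_scalar; congr (\det _).
by apply/matrixP => i j; rewrite !mxE; case: (i == j); rewrite ?subr0.
Qed.

Lemma lap_char (R : rcfType) n p (g : 'I_n -> 'I_p) (adj : rel 'I_n) (w : 'I_n -> R) :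
  (forall i j, adj i j = adj j i) ->
  (forall i j, adj i j -> g i = g j) ->
  (forall i j, g i = g j -> connect adj i j) ->
  (forall i, 0 < w i) ->
  (forall q, exists i, g i = q) ->
  exists q : {poly R},
    char_poly (diag_mx (\row_i (w i)^-1) *m LDm R adj) = 'X^p * q /\ q.[0] != 0.
Proof.
move=> sym ing conn wpos surj.
pose C0 : 'M[R]_(p, n) := \matrix_(q, i) ((g i == q)%:R / (#|[pred j | g j == q]|)%:R).
have CB : C0 *m Bm R g = 1%:M.
  apply/matrixP => q r; rewrite !mxE; under eq_bigr do rewrite !mxE.
  case: (eqVneq q r) => [<-|qr].
    under eq_bigr do rewrite mulrAC -natrM mulnb andbb.
    rewrite -mulr_suml -card_sum mulfV //= pnatr_eq0.
    apply/eqP => /card0_eq; have [i gi] := surj q.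
    by move=> /(_ i); rewrite !inE gi eqxx.
  rewrite big1 // => i _; case: (eqVneq (g i) q) => [gi|]; last by rewrite !mul0r.
  by rewrite gi (negbTE qr) mulr0.
set X := diag_mx (\row_i (w i)^-1) *m LDm R adj.
have XB : X *m Bm R g = 0 by rewrite /X -mulmxA LD_B // mulmx0.
have ck := @charkey _ _ _ X (Bm R g) C0 (- 1)%:M CB XB.
rewrite char_scalar mul_mx_scalar scaleN1r mulNmx -/(_ - _) in ck.
set Q := char_poly _ in ck.
have Q0 : Q.[0] != 0.
  rewrite horner_coef0 char_poly_det mulf_neq0 ?expf_neq0 ?oppr_eq0 ?oner_eq0 //.
  exact: nonsing.
have cop : coprimep ('X^p) (('X - (- 1)%:P) ^+ p : {poly R}).
  apply: coprimep_expl; apply: coprimep_expr.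
  by rewrite coprimep_XsubC rootX oppr_eq0 oner_eq0.
have : 'X^p %| char_poly X.
  by rewrite -(Gauss_dvdpr _ cop) -ck dvdp_mull.
case/dvdpP => r hr.
exists r; split; first by rewrite hr mulrC.
apply: contraNneq Q0 => r0.
have : Q = ('X - (- 1)%:P) ^+ p * r.
  apply: (mulIf (x := 'X^p)); first by rewrite expf_neq0 ?polyX_eq0.
  by rewrite ck hr mulrA.
by move=> ->; rewrite hornerM r0 mulr0.
Qed.

End Helpers.
Import Helpers.

Lemma spec_root (R : rcfType) n (A : 'M[R]_n) z :
  spec A z = root (map_poly (real_complex R) (char_poly A)) z.
Proof. by rewrite /spec /= eigenvalue_root_char map_char_poly. Qed.

Lemma weight_pos (R : rcfType) (M : nat) (N : nat -> nat)
  (g : forall l : nat, 'I_(N l) -> 'I_(N l.+1))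
  (hg : forall l, (1 <= l <= M)%N -> consecutive_groups g l)
  (a : 'I_(N 1%N) -> R) (ha : forall i, 0 < a i) :
  forall l, (l < M)%N -> forall i, 0 < @weight R N g a l i.
Proof.
elim => [|l IH] hl i; first exact: ha.
have [_ surj] := hg l.+1 (ltnW hl).
have [j gj] := surj i.
rewrite /= (bigD1 j) /=; last by rewrite gj.
have h1 := IH (ltnW hl) j.
have h2 : 0 <= \sum_(k | (g l.+1 k == i) && (k != j)) @weight R N g a l k.
  by apply: sumr_ge0 => k _; apply: ltW; apply: IH; apply: ltnW.
move: h1 h2; clear; lra.
Qed.

Lemma Cok_CB (R : rcfType) (N : nat -> nat)
  (g : forall l : nat, 'I_(N l) -> 'I_(N l.+1)) l (C : 'M[R]_(N l.+1, N l)) :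
  C_ok g C -> C *m Bmat R g l = 1%:M.
Proof.
rewrite /C_ok => -[h0 [_ h1]].
apply/matrixP => p q; rewrite !mxE.
case: (eqVneq p q) => [<-|pq].
  rewrite -(h1 p); apply: eq_bigr => i _; rewrite mxE.
  by case: (eqVneq (g l i) p) => [gi|/h0 ->]; rewrite ?mul0r ?mulr1.
rewrite big1 // => i _; rewrite mxE.
case: (eqVneq (g l i) q) => [gi|]; last by rewrite mulr0.
by rewrite h0 ?mul0r // gi eq_sym.
Qed.

Lemma CprodBprod (R : rcfType) (M : nat) (N : nat -> nat)
  (g : forall l : nat, 'I_(N l) -> 'I_(N l.+1))
  (C : forall l : nat, 'M[R]_(N l.+1, N l))
  (hC : forall l, (1 <= l < M)%N -> C_ok g (C l)) :
  forall l, (l < M)%N -> Cprod C l *m Bprod R g l = 1%:M.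
Proof.
elim => [|l IH] hl; first by rewrite /= mulmx1.
rewrite -[Cprod C l.+1]/(C l.+1 *m Cprod C l) -[Bprod R g l.+1]/(Bprod R g l *m Bmat R g l.+1).
rewrite mulmxA -[C l.+1 *m _ *m _]mulmxA IH ?(ltnW hl) // mulmx1.
exact: Cok_CB (hC l.+1 hl).
Qed.

Lemma aux (F : idomainType) (x y z : F) a b c :
  z != 0 -> x * z ^+ a = z ^+ b * (z ^+ c * y) -> (x == 0) = (y == 0).
Proof.
move=> z0 e.
have : (x * z ^+ a == 0) = (z ^+ b * (z ^+ c * y) == 0) by rewrite e.
by rewrite !mulf_eq0 !expf_eq0 (negbTE z0) !andbF /= orbF.
Qed.

Lemma cancel_prod (F : fieldType) M (k : nat -> nat) (P : {poly F}) (Q : 'I_M -> {poly F}) :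
  (0 < M)%N -> k M.-1 = 1%N ->
  P * \prod_(l < M.-1) 'X^(k l) = \prod_(l < M) ('X^(k l) * Q l) ->
  P = 'X * \prod_(l < M) Q l.
Proof.
case: M Q => [//|M'] Q _ hk.
rewrite big_split big_ord_recr /= hk expr1 => h.
apply: (mulIf (x := \prod_(l < M') 'X^(k l))).
  by apply/prodf_neq0 => l _; rewrite expf_neq0 ?polyX_eq0.
by rewrite h [RHS]mulrC mulrA.
Qed.

Theorem theorem1 (R : rcfType) (M : nat) (hM : (2 <= M)%N)
  (N : nat -> nat) (hNM : N M.+1 = 1%N)
  (g : forall l : nat, 'I_(N l) -> 'I_(N l.+1))
  (hg : forall l, (1 <= l <= M)%N -> consecutive_groups g l)
  (adj : forall l : nat, rel 'I_(N l))
  (hadj : forall l, (1 <= l <= M)%N -> group_graphs_ok g (adj l))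
  (a : 'I_(N 1%N) -> R) (ha : forall i, 0 < a i)
  (C : forall l : nat, 'M[R]_(N l.+1, N l))
  (hC : forall l, (1 <= l < M)%N -> C_ok g (C l)) :
  let Ll := Llayer g a C adj in
  let L := \sum_(l < M) Ll l in
  (forall z : R[i],
     spec L z <->
     (z = 0 \/ exists l : 'I_M, z != 0 /\ spec (Ll l) z))
  /\ mup 0 (char_poly L) = 1%N.
Proof.
move=> Ll L.
have hM1 : (0 < M)%N by apply: leq_trans hM.
pose X l : 'M[R]_(N l.+1) := Kmat g a l *m lapD R (adj l.+1).
have eL : L = \sum_(l < M) Bprod R g l *m X l *m Cprod C l.
  by apply: eq_bigr => l _; rewrite /Ll /Llayer /X !mulmxA.
have hcore := @core R M N g C X hM1.
have hyp : forall l, (l.+1 < M)%N ->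
    C l.+1 *m Bmat R g l.+1 = 1%:M /\ X l *m Bmat R g l.+1 = 0.
  move=> l hl; split.
    exact: Cok_CB (hC l.+1 hl).
  have [_ [ing _]] := hadj l.+1 (ltnW hl).
  have h := @LD_B R _ _ (g l.+1) (adj l.+1) ing.
  by rewrite /X -mulmxA [_ *m Bmat _ _ _]h mulmx0.
move/(_ hyp): hcore; rewrite -eL => hcore.
have hq : forall l, (l < M)%N ->
    exists r, char_poly (X l) = 'X^(N l.+2) * r /\ r.[0] != 0.
  move=> l hl.
  have [hs [ing conn]] := hadj l.+1 hl.
  have [_ surj] := hg l.+1 hl.
  have wp := @weight_pos R M N g hg a ha l hl.
  have := lap_char hs ing conn wp surj.
  by [].
pose q l := char_poly (X l) %/ 'X^(N l.+2).
have hq' : forall l, (l < M)%N -> char_poly (X l) = 'X^(N l.+2) * q l /\ (q l).[0] != 0.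
  move=> l hl; have [r [e r0]] := hq l hl.
  by rewrite /q e mulKp ?expf_neq0 ?polyX_eq0.
have charL : char_poly L = 'X * \prod_(l < M) q l.
  move: hcore.
  rewrite (eq_bigr (fun l : 'I_M => 'X^(N l.+2) * q l)); last first.
    by move=> l _; rewrite (proj1 (hq' l (ltn_ord l))).
  apply: (@cancel_prod _ M (fun l => N l.+2) _ _ hM1); first by rewrite prednK.
have hLl : forall l, (l < M)%N ->
    char_poly (Ll l) * 'X^(N l.+1) = 'X^(N 1%N) * ('X^(N l.+2) * q l).
  move=> l hl.
  have := @charkey _ _ _ (0 : 'M[R]_(N 1%N)) (Bprod R g l) (Cprod C l) (X l)
    (@CprodBprod R M N g C hC l hl) (mul0mx _ _).
  rewrite add0r char_poly0 -(proj1 (hq' l hl)) => h.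
  by rewrite [RHS]mulrC -h /Ll /Llayer /X !mulmxA.
split; last first.
  rewrite charL mulrC mupMr.
    by have := mup_XsubCX 1 0 (0 : R); rewrite subr0 expr1 eqxx.
  rewrite /root horner_prod; apply/prodf_neq0 => l _.
  exact: (proj2 (hq' l (ltn_ord l))).
move=> z.
have specLl : forall l : 'I_M, z != 0 -> spec (Ll l) z =
      ((map_poly (real_complex R) (q l)).[z] == 0).
  move=> l z0; rewrite spec_root /root.
  have := congr1 (fun p => (map_poly (real_complex R) p).[z]) (hLl l (ltn_ord l)).
  rewrite /= !rmorphM /= !map_polyXn !hornerM !hornerXn => e.
  exact: aux z0 e.
rewrite spec_root charL rmorphM /= map_polyX rmorph_prod rootM rootX.
rewrite /root horner_prod.
split.
  case/orP => [/eqP ->|]; first by left.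
  move/prodf_eq0 => [l _ hl].
  case: (eqVneq z 0) => [->|z0]; first by left.
  by right; exists l; split => //; rewrite specLl.
case => [->|[l [z0 hs]]]; first by rewrite eqxx.
apply/orP; right; apply/prodf_eq0; exists l => //.
by rewrite -specLl.
Qed.
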